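(* Let $d\ge2$, $n\ge1$, and let $H$ be a Hermitian operator on $(\mathbb{C}^d)^{\otimes n}$ acting nontrivially only on a $k$-qudit subsystem. Then for every $t\in\mathbb{R}$, the unitary $U_t=e^{-itH}$ satisfies $\mathrm{CiS}[U_t]\le k$.
   Context: Let $V=\mathbb{Z}_d\times\mathbb{Z}_d$; for $a=(s,t)\in V$, $P_a=X^sZ^t$ with $X|j\rangle=|j+1\bmod d\rangle$, $Z|j\rangle=e^{2\pi ij/d}|j\rangle$; $P_{\vec a}=\bigotimes_iP_{a_i}$, $|\vec a|=\#\{i:a_i\ne(0,0)\}$. $\|A\|_2=(d^{-n}\mathrm{Tr}(A^\dagger A))^{1/2}$. For $\|O\|_2=1$, $P_O[\vec a]=d^{-2n}|\mathrm{Tr}(OP_{\vec a})|^2$, $I[O]=\sum_{\vec a}|\vec a|P_O[\vec a]$, and $\mathrm{CiS}[U]=\max_{\|O\|_2=1}|I[UOU^\dagger]-I[O]|$. *)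

(* Defs.v *)
From mathcomp Require Import all_boot all_order all_algebra.
From mathcomp Require Import all_classical all_reals all_analysis.
From mathcomp Require Import complex.
Set Implicit Arguments. Unset Strict Implicit. Unset Printing Implicit Defensive.
Import Order.TTheory GRing.Theory Num.Theory numFieldNormedType.Exports.
Local Open Scope ring_scope.
Local Open Scope classical_set_scope.

(* Computational basis of (C^d)^{(x) n}: strings j = (j_1,...,j_n), j_i in Z_d. *)
Definition qbasis (d n : nat) := {ffun 'I_n -> 'I_d}.

(* Operators on (C^d)^{(x) n}, given by their matrix entries <x| A |y>. *)
Definition op (R : realType) (d n : nat) := qbasis d n -> qbasis d n -> R[i].

Definition opmul {R : realType} {d n : nat} (A B : op R d n) : op R d n :=
  fun x y => \sum_(z : qbasis d n) A x z * B z y.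
Definition opid {R : realType} {d n : nat} : op R d n :=
  fun x y => (x == y)%:R.
Definition opadj {R : realType} {d n : nat} (A : op R d n) : op R d n :=
  fun x y => (A y x)^*.
Definition opscale {R : realType} {d n : nat} (c : R[i]) (A : op R d n) : op R d n :=
  fun x y => c * A x y.
Definition optr {R : realType} {d n : nat} (A : op R d n) : R[i] :=
  \sum_(x : qbasis d n) A x x.
Definition oppow {R : realType} {d n : nat} (A : op R d n) (k : nat) : op R d n :=
  iter k (opmul A) opid.

Definition is_hermitian_op {R : realType} {d n : nat} (H : op R d n) : Prop :=
  opadj H = H.

Definition exp_partial {R : realType} {d n : nat} (A : op R d n) (N : nat) : op R d n :=
  fun x y => \sum_(k < N) (k`!%:R)^-1 * oppow A k x y.
Definition opexp {R : realType} {d n : nat} (A : op R d n) : op R d n :=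
  fun x y => Complex (limn (fun N => complex.Re (exp_partial A N x y)))
                     (limn (fun N => complex.Im (exp_partial A N x y))).

Definition omega (R : realType) (d : nat) : R[i] :=
  Complex (cos (2 * pi / d%:R)) (sin (2 * pi / d%:R)).

(* Single-qudit Pauli P_(s,t) = X^s Z^t: X^s Z^t |k> = omega^(t k) |k + s mod d>,
   so <j| X^s Z^t |k> = [j = k + s mod d] omega^(t k). *)
Definition pauli1 (R : realType) (d : nat) (a : 'I_d * 'I_d) (j k : 'I_d) : R[i] :=
  if (nat_of_ord j == (nat_of_ord k + nat_of_ord a.1) %% d)%N
  then omega R d ^+ (nat_of_ord a.2 * nat_of_ord k)%N else 0.

(* P_a = tensor_i P_{a_i}, for a in V^n, V = Z_d x Z_d. *)
Definition pstring (d n : nat) := {ffun 'I_n -> 'I_d * 'I_d}.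
Definition pauli (R : realType) {d n : nat} (a : pstring d n) : op R d n :=
  fun x y => \prod_(i < n) pauli1 R (a i) (x i) (y i).

Definition pweight {d n : nat} (a : pstring d n) : nat :=
  #|[set i : 'I_n | (nat_of_ord (a i).1 != 0%N) || (nat_of_ord (a i).2 != 0%N)]|.

Definition hsnorm {R : realType} {d n : nat} (A : op R d n) : R :=
  Num.sqrt (complex.Re (((d ^ n)%:R)^-1 * optr (opmul (opadj A) A))).

Definition pauli_weight {R : realType} {d n : nat} (O : op R d n) (a : pstring d n) : R :=
  ((d ^ (2 * n))%:R)^-1 * (complex.Re `|optr (opmul O (pauli R a))|) ^+ 2.

Definition influence {R : realType} {d n : nat} (O : op R d n) : R :=
  \sum_(a : pstring d n) (pweight a)%:R * pauli_weight O a.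

Definition CiS {R : realType} {d n : nat} (U : op R d n) : R :=
  sup [set r : R | exists O : op R d n, hsnorm O = 1 /\
         r = `| influence (opmul (opmul U O) (opadj U)) - influence O |].

(* H acts nontrivially only on the qudits in S:  H = h_S (x) Id_{S^c}, i.e.
   <x|H|y> = [x_{S^c} = y_{S^c}] <x_S| h |y_S> for an operator h on the S-qudits
   (represented as a function of the S-coordinates only). *)
Definition acts_only_on {R : realType} {d n : nat} (S : {set 'I_n}) (H : op R d n) : Prop :=
  exists h : op R d n,
    (forall x x' y y' : qbasis d n,
        (forall i, i \in S -> x i = x' i) -> (forall i, i \in S -> y i = y' i) ->
        h x y = h x' y') /\
    (forall x y : qbasis d n,
        H x y = if [forall i, (i \notin S) ==> (x i == y i)] then h x y else 0).

(* Main.v *)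
Require Import Defs.
From mathcomp Require Import all_boot all_order all_algebra.
From mathcomp Require Import all_classical all_reals all_analysis.
From mathcomp Require Import complex.
Set Implicit Arguments. Unset Strict Implicit. Unset Printing Implicit Defensive.
Import Order.TTheory GRing.Theory Num.Theory numFieldNormedType.Exports.
Local Open Scope ring_scope.

Lemma sum_delta (K : pzRingType) (I : finType) (x : I) (F : I -> K) :
  \sum_z (x == z)%:R * F z = F x.
Proof.
rewrite (bigD1 x) //= eqxx mul1r big1 ?addr0 // => z.
by rewrite eq_sym => /negbTE ->; rewrite mul0r.
Qed.

Lemma sum_delta' (K : pzRingType) (I : finType) (x : I) (F : I -> K) :
  \sum_z F z * (z == x)%:R = F x.
Proof.
rewrite (bigD1 x) //= eqxx mulr1 big1 ?addr0 // => z.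
by move=> /negbTE ->; rewrite mulr0.
Qed.

Section NC.
Variable R : realType.
Definition nc (z : R[i]) : R := Num.sqrt (complex.Re z ^+ 2 + complex.Im z ^+ 2).

Lemma normcC (z : R[i]) : `|z| = (nc z)%:C%C.
Proof. by rewrite normc_def. Qed.

Lemma nc_ge0 z : 0 <= nc z.
Proof. exact: sqrtr_ge0. Qed.

Lemma ncM z w : nc (z * w) = nc z * nc w.
Proof. by have := normrM z w; rewrite !normcC -rmorphM => -[]. Qed.

Lemma ncD z w : nc (z + w) <= nc z + nc w.
Proof. by have := ler_normD z w; rewrite !normcC -rmorphD lecR. Qed.

Lemma nc0 : nc 0 = 0.
Proof. by rewrite /nc /= expr0n /= addr0 sqrtr0. Qed.

Lemma ncN z : nc (- z) = nc z.
Proof. by have := normrN z; rewrite !normcC => -[]. Qed.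

Lemma ncR (r : R) : nc r%:C%C = `|r|.
Proof. by rewrite /nc /= expr0n /= addr0 sqrtr_sqr. Qed.

Lemma nc_sum (I : finType) (F : I -> R[i]) : nc (\sum_i F i) <= \sum_i nc (F i).
Proof.
elim/big_ind2: _ => //; first by rewrite nc0.
by move=> x1 x2 y1 y2 h1 h2; apply: le_trans (ncD _ _) (lerD h1 h2).
Qed.

Lemma Re_le_nc z : `|complex.Re z| <= nc z.
Proof. by have := normc_ge_Re z; rewrite normcC lecR. Qed.

Lemma Im_le_nc z : `|complex.Im z| <= nc z.
Proof. by case: z => a b; rewrite /nc /= -sqrtr_sqr ler_wsqrtr // lerDr sqr_ge0. Qed.

Lemma conjM_nc (z : R[i]) : z^* * z = ((nc z) ^+ 2)%:C%C.
Proof. by rewrite mulrC -normCK normcC rmorphXn. Qed.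
End NC.

Section OpAlg.
Variables (R : realType) (d n : nat).
Local Notation T := (qbasis d n).
Local Notation op := (op R d n).
Implicit Types (A B C X : op).

Lemma opmulA A B C : opmul (opmul A B) C = opmul A (opmul B C).
Proof.
apply/funext=> x; apply/funext=> y; rewrite /opmul.
under eq_bigr do rewrite big_distrl /=.
rewrite exchange_big /=; apply: eq_bigr => z _.
by rewrite big_distrr /=; apply: eq_bigr => w _; rewrite mulrA.
Qed.

Lemma opmul1l A : opmul opid A = A.
Proof. by apply/funext=> x; apply/funext=> y; rewrite /opmul /opid sum_delta. Qed.

Lemma opmul1r A : opmul A opid = A.
Proof. by apply/funext=> x; apply/funext=> y; rewrite /opmul /opid sum_delta'. Qed.

Lemma optrC A B : optr (opmul A B) = optr (opmul B A).
Proof.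
rewrite /optr /opmul exchange_big; apply: eq_bigr => x _.
by apply: eq_bigr => z _; rewrite mulrC.
Qed.

Lemma opadjM A B : opadj (opmul A B) = opmul (opadj B) (opadj A).
Proof.
apply/funext=> x; apply/funext=> y; rewrite /opadj /opmul rmorph_sum.
by apply: eq_bigr => z _; rewrite rmorphM mulrC.
Qed.

Lemma opadjK A : opadj (opadj A) = A.
Proof. by apply/funext=> x; apply/funext=> y; rewrite /opadj conjCK. Qed.

Definition opsum (I : finType) (F : I -> op) : op := fun x y => \sum_i F i x y.

Lemma opmul_sumr (I : finType) A (F : I -> op) :
  opmul A (opsum F) = opsum (fun i => opmul A (F i)).
Proof.
apply/funext=> x; apply/funext=> y; rewrite /opmul /opsum.
under eq_bigr do rewrite big_distrr /=.
by rewrite exchange_big.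
Qed.

Lemma opmul_suml (I : finType) (F : I -> op) B :
  opmul (opsum F) B = opsum (fun i => opmul (F i) B).
Proof.
apply/funext=> x; apply/funext=> y; rewrite /opmul /opsum.
under eq_bigr do rewrite big_distrl /=.
by rewrite exchange_big.
Qed.

Lemma opmul_scaler A c B : opmul A (opscale c B) = opscale c (opmul A B).
Proof.
apply/funext=> x; apply/funext=> y; rewrite /opmul /opscale big_distrr.
by apply: eq_bigr => z _; rewrite mulrCA.
Qed.

Lemma opmul_scalel c A B : opmul (opscale c A) B = opscale c (opmul A B).
Proof.
apply/funext=> x; apply/funext=> y; rewrite /opmul /opscale big_distrr.
by apply: eq_bigr => z _; rewrite -mulrA.
Qed.

Lemma optr_sum (I : finType) (F : I -> op) : optr (opsum F) = \sum_i optr (F i).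
Proof. by rewrite /optr /opsum exchange_big. Qed.

Lemma optr_scale c A : optr (opscale c A) = c * optr A.
Proof. by rewrite /optr /opscale big_distrr. Qed.

Definition upd (x : T) (i : 'I_n) (c : 'I_d) : T := [ffun j => if j == i then c else x j].

Lemma upd_at x i c : upd x i c i = c.
Proof. by rewrite /upd ffunE eqxx. Qed.

Lemma upd_ne x i c j : j != i -> upd x i c j = x j.
Proof. by rewrite /upd ffunE => /negbTE ->. Qed.

Definition Eop (i : 'I_n) (c c' : 'I_d) : op :=
  fun x y => ((x == upd y i c) && (y i == c'))%:R.

Lemma Eop_sym i c c' (x y : T) :
  (x == upd y i c) && (y i == c') = (y == upd x i c') && (x i == c).
Proof.
apply/andP/andP => -[/eqP -> /eqP <-]; split.
- apply/eqP/ffunP => j; rewrite /upd !ffunE.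
  by case: (j =P i) => [->|]; rewrite ?eqxx.
- by rewrite upd_at.
- apply/eqP/ffunP => j; rewrite /upd !ffunE.
  by case: (j =P i) => [->|]; rewrite ?eqxx.
- by rewrite upd_at.
Qed.

Lemma mulE_r A i c c' x y :
  opmul A (Eop i c c') x y = (y i == c')%:R * A x (upd y i c).
Proof.
rewrite /opmul /Eop.
under eq_bigr do rewrite -mulnb natrM mulrA.
by rewrite -big_distrl /= sum_delta' mulrC.
Qed.

Lemma mulE_l A i c c' x y :
  opmul (Eop i c c') A x y = (x i == c)%:R * A (upd x i c') y.
Proof.
rewrite /opmul /Eop.
under eq_bigr do rewrite Eop_sym -mulnb natrM mulrAC.
rewrite -big_distrl /= mulrC; congr (_ * _).
by under eq_bigr do rewrite eq_sym; rewrite sum_delta.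
Qed.

Lemma opadjE i c c' : opadj (Eop i c c') = Eop i c' c.
Proof.
apply/funext=> x; apply/funext=> y; rewrite /opadj /Eop conjC_nat.
by rewrite Eop_sym.
Qed.


Definition Tw i X : op := opscale (d%:R^-1)
  (opsum (fun cc : 'I_d * 'I_d => opmul (opmul (Eop i cc.1 cc.2) X) (Eop i cc.2 cc.1))).

Lemma EXE_entry i c1 c2 X x y :
  opmul (opmul (Eop i c1 c2) X) (Eop i c2 c1) x y =
  (y i == c1)%:R * ((x i == c1)%:R * X (upd x i c2) (upd y i c2)).
Proof. by rewrite mulE_r mulE_l. Qed.

Lemma TwE i X x y :
  Tw i X x y = d%:R^-1 * ((x i == y i)%:R * \sum_c X (upd x i c) (upd y i c)).
Proof.
rewrite /Tw /opscale /opsum; congr (_ * _).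
under eq_bigr do rewrite EXE_entry.
rewrite -(pair_big xpredT xpredT (fun c1 c2 =>
   (y i == c1)%:R * ((x i == c1)%:R * X (upd x i c2) (upd y i c2)))) /=.
under eq_bigr do rewrite -big_distrr -big_distrr /=.
rewrite -(sum_delta (y i) (fun c1 => (x i == c1)%:R * \sum_c X (upd x i c) (upd y i c))).
by [].
Qed.

Lemma Tw'E i X x y :
  opsum (fun cc : 'I_d * 'I_d => opmul (opmul (Eop i cc.2 cc.1) X) (Eop i cc.1 cc.2)) x y
  = (x i == y i)%:R * \sum_c X (upd x i c) (upd y i c).
Proof.
rewrite /opsum.
under eq_bigr do rewrite EXE_entry.
rewrite -(pair_big xpredT xpredT (fun c1 c2 =>
   (y i == c2)%:R * ((x i == c2)%:R * X (upd x i c1) (upd y i c1)))) /=.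
rewrite big_distrr /=; apply: eq_bigr => c _.
rewrite -(sum_delta (y i) (fun c2 => (x i == c2)%:R * X (upd x i c) (upd y i c))).
by apply: eq_bigr => c2 _; rewrite mulrA.
Qed.

Lemma optr_Tw i X P : optr (opmul (Tw i X) P) = optr (opmul X (Tw i P)).
Proof.
have -> : Tw i P = opscale (d%:R^-1)
  (opsum (fun cc : 'I_d * 'I_d => opmul (opmul (Eop i cc.2 cc.1) P) (Eop i cc.1 cc.2))).
  apply/funext=> x; apply/funext=> y; rewrite TwE /opscale Tw'E //.
rewrite /Tw opmul_scalel opmul_scaler !optr_scale; congr (_ * _).
rewrite opmul_suml opmul_sumr !optr_sum.
apply: eq_bigr => -[c1 c2] _ /=.
by rewrite !opmulA optrC !opmulA.
Qed.

Definition commE i A := forall c c', opmul A (Eop i c c') = opmul (Eop i c c') A.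

Lemma commE_adj i A : commE i A -> commE i (opadj A).
Proof.
move=> h c c'; have := congr1 opadj (h c' c).
by rewrite !opadjM !opadjE => ->.
Qed.

Lemma Tw_conj i U V X : commE i U -> commE i V ->
  Tw i (opmul (opmul U X) V) = opmul (opmul U (Tw i X)) V.
Proof.
move=> hU hV; rewrite /Tw opmul_scaler opmul_scalel; congr opscale.
rewrite opmul_sumr opmul_suml; congr opsum; apply/funext => -[c1 c2] /=.
rewrite !opmulA hV -[opmul (Eop i c1 c2) (opmul U _)]opmulA -hU.
by rewrite !opmulA.
Qed.

Definition fro X : R := \sum_x \sum_y (nc (X x y)) ^+ 2.


Lemma froC X : optr (opmul (opadj X) X) = (fro X)%:C%C.
Proof.
rewrite /optr /opmul /opadj /fro rmorph_sum exchange_big /=.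
apply: eq_bigr => x _; rewrite rmorph_sum; apply: eq_bigr => z _.
by rewrite conjM_nc.
Qed.

Lemma fro_ge0 X : 0 <= fro X.
Proof. by apply: sumr_ge0 => x _; apply: sumr_ge0 => y _; apply: sqr_ge0. Qed.

Lemma fro_conj U X : opmul (opadj U) U = opid ->
  fro (opmul (opmul U X) (opadj U)) = fro X.
Proof.
move=> hUU; apply: (@complexI R); rewrite -!froC.
rewrite !opadjM opadjK !opmulA.
rewrite -[opmul (opadj U) (opmul U _)]opmulA hUU opmul1l.
rewrite optrC !opmulA hUU opmul1r //.
Qed.

End OpAlg.

From mathcomp Require Import all_boot all_order all_algebra.
From mathcomp Require Import all_classical all_reals all_analysis.
From mathcomp Require Import complex.
Set Implicit Arguments. Unset Strict Implicit. Unset Printing Implicit Defensive.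
Import Order.TTheory GRing.Theory Num.Theory numFieldNormedType.Exports.
Local Open Scope ring_scope.
From mathcomp Require Import ring lra.

Section Omega.
Variables (R : realType) (d : nat).
Hypothesis hd : (1 < d)%N.
Local Notation w := (omega R d).

Lemma d_gt0 : (0 < d)%N. Proof. exact: ltnW. Qed.
Lemma dR_neq0 : (d%:R : R) != 0. Proof. by rewrite pnatr_eq0 -lt0n d_gt0. Qed.
Lemma dC_neq0 : (d%:R : R[i]) != 0. Proof. by rewrite pnatr_eq0 -lt0n d_gt0. Qed.

Lemma omega_pow m : w ^+ m =
  Complex (cos (m%:R * (2 * pi / d%:R))) (sin (m%:R * (2 * pi / d%:R))).
Proof.
elim: m => [|m IH]; first by rewrite expr0 mul0r cos0 sin0.
rewrite exprS IH /omega; set th := (2 * pi / d%:R).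
rewrite -natr1 mulrDl mul1r cosD sinD.
set c := cos _; set s := sin _; set c' := cos _; set s' := sin _.
apply/eqP; rewrite eq_complex /=; apply/andP; split; apply/eqP; ring.
Qed.

Lemma omega_d : w ^+ d = 1.
Proof.
rewrite omega_pow mulrC divfK ?dR_neq0 // mulr_natl cos2pi sin2pi //.
Qed.

Lemma omega_ne1 m : (0 < m < d)%N -> w ^+ m != 1.
Proof.
move=> /andP[m0 md]; rewrite omega_pow; apply/negP.
rewrite eq_complex /= => /andP[/eqP hc _].
pose phi : R := m%:R * pi / d%:R.
have e : m%:R * (2 * pi / d%:R) = phi + phi.
  by rewrite /phi; ring.
have p0 : 0 < phi by rewrite /phi divr_gt0 ?mulr_gt0 ?ltr0n ?pi_gt0 ?d_gt0.
have p1 : phi < pi.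
  rewrite /phi ltr_pdivrMr ?ltr0n ?d_gt0 // [pi * _]mulrC ltr_pM2r ?pi_gt0 //.
  by rewrite ltr_nat.
have sp : 0 < sin phi by apply: sin_gt0_pi; rewrite p0 p1.
move: hc; rewrite e cosD -!expr2 cos2sin2 => hc.
have : sin phi ^+ 2 = 0 by lra.
by move/eqP; rewrite sqrf_eq0 gt_eqF.
Qed.

Lemma geo0 (r : R[i]) : r ^+ d = 1 -> r != 1 -> \sum_(t < d) r ^+ t = 0.
Proof.
move=> hr hr1; have := subrX1 r d; rewrite hr subrr => /esym/eqP.
by rewrite mulf_eq0 subr_eq0 (negbTE hr1) /= => /eqP.
Qed.

Lemma omega_powd m : (w ^+ m) ^+ d = 1.
Proof. by rewrite -exprM mulnC exprM omega_d expr1n. Qed.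

Lemma charsum (t : nat) : (t < d)%N ->
  \sum_(c < d) (w ^+ t) ^+ c = if t == 0%N then d%:R else 0.
Proof.
move=> td; case: eqP => [->|/eqP t0].
  by rewrite expr0 (eq_bigr (fun _ => 1)) ?sumr_const ?card_ord // => c _; rewrite expr1n.
by apply: geo0; [exact: omega_powd | apply: omega_ne1; rewrite lt0n t0].
Qed.

Lemma omega_unit : w * w^* = 1.
Proof.
rewrite /omega; set c := cos _; set s := sin _.
have h : c ^+ 2 + s ^+ 2 = 1 by rewrite /c /s cos2sin2 subrK.
apply/eqP; rewrite eq_complex /=; apply/andP; split; apply/eqP.
  by rewrite -h; ring.
by ring.
Qed.

Lemma omega_unit_pow m : w ^+ m * (w ^+ m)^* = 1.
Proof. by rewrite rmorphXn -exprMn omega_unit expr1n. Qed.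

Lemma omega_inj (k k' : nat) : (k < d)%N -> (k' < d)%N -> w ^+ k = w ^+ k' -> k = k'.
Proof.
have key a b : (a < b)%N -> (b < d)%N -> w ^+ a = w ^+ b -> False.
  move=> ab bd e.
  have : w ^+ (b - a) = 1.
    have eb : w ^+ b = w ^+ a * w ^+ (b - a) by rewrite -exprD subnKC // ltnW.
    have := congr1 (fun z => (w ^+ a)^* * z) e.
    by rewrite /= eb mulrA [_^* * _]mulrC omega_unit_pow mul1r => /esym.
  by apply/eqP/omega_ne1; rewrite subn_gt0 ab /= (leq_ltn_trans (leq_subr _ _) bd).
move=> kd k'd e; case: (ltngtP k k') => // h.
- by case: (key _ _ h k'd e).
- by case: (key _ _ h kd (esym e)).
Qed.

Lemma sum_shift (k : nat) (F : nat -> R[i]) :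
  \sum_(s < d) F ((k + s) %% d)%N = \sum_(u < d) F u.
Proof.
pose f (s : 'I_d) : 'I_d := Ordinal (ltn_pmod (k + s) d_gt0).
have inj : injective f.
  move=> s s' /(congr1 val) /= /eqP; rewrite eqn_modDl !modn_small // => /eqP.
  exact: val_inj.
by rewrite [RHS](reindex_inj inj).
Qed.

Lemma pauli1E (v : 'I_d * 'I_d) (j k : 'I_d) :
  pauli1 R v j k = ((j : nat) == (k + v.1) %% d)%N%:R * w ^+ (v.2 * k).
Proof. by rewrite /pauli1; case: ifP => _; rewrite ?mul1r ?mul0r. Qed.

Lemma pauli1_orth (j k j' k' : 'I_d) :
  \sum_(v : 'I_d * 'I_d) pauli1 R v j k * (pauli1 R v j' k')^* =
  d%:R * ((j == j') && (k == k'))%:R.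
Proof.
pose r := w ^+ k * (w ^+ k')^*.
pose A (s : 'I_d) := ((j : nat) == (k + s) %% d)%N%:R * ((j' : nat) == (k' + s) %% d)%N%:R : R[i].
have e v : pauli1 R v j k * (pauli1 R v j' k')^* = A v.1 * r ^+ v.2.
  rewrite !pauli1E rmorphM rmorph_nat /A /r exprMn -rmorphXn -!exprM.
  by rewrite [(k * _)%N]mulnC [(k' * _)%N]mulnC; ring.
under eq_bigr do rewrite e.
rewrite -(pair_big xpredT xpredT (fun (s t : 'I_d) => A s * r ^+ t)) /=.
under eq_bigr do rewrite -big_distrr /=.
case: (eqVneq k k') => [ekk|nkk].
- subst k'; have r1 : r = 1 by rewrite /r omega_unit_pow.
  have s1 : \sum_(i < d) r ^+ i = d%:R.
    by rewrite r1 (eq_bigr (fun _ => 1)) ?sumr_const ?card_ord // => *; rewrite expr1n.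
  under eq_bigr do rewrite s1.
  rewrite -big_distrl /= mulrC andbT; congr (_ * _).
  have := sum_shift k (fun u => ((j : nat) == u)%:R * ((j' : nat) == u)%:R).
  rewrite /= => ->.
  have := sum_delta j (fun u : 'I_d => ((j' : nat) == u)%:R).
  by rewrite /= eq_sym => <-.
- have rd : r ^+ d = 1 by rewrite /r exprMn -rmorphXn !omega_powd rmorph1 mulr1.
  have rn1 : r != 1.
    apply/eqP => r1; move: nkk; rewrite -val_eqE /= => /eqP; apply.
    apply: omega_inj => //.
    have := congr1 (fun z => z * w ^+ k') r1.
    by rewrite /r -mulrA [_^* * _]mulrC omega_unit_pow mulr1 mul1r.
  rewrite andbF mulr0.
  by apply: big1 => s _; rewrite geo0 ?mulr0.
Qed.

Lemma diag_sum (v : 'I_d * 'I_d) :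
  \sum_(c < d) pauli1 R v c c = d%:R * ((v.1 == 0 :> nat) && (v.2 == 0 :> nat))%:R.
Proof.
have e c : pauli1 R v c c = (v.1 == 0 :> nat)%:R * (w ^+ v.2) ^+ c.
  rewrite pauli1E -exprM mulnC; congr (_%:R * _).
  rewrite -{1}(modn_small (ltn_ord c)) -{1}[nat_of_ord c]addn0 eqn_modDl.
  by rewrite (modn_small (ltn_ord _)) mod0n eq_sym.
under eq_bigr do rewrite e.
rewrite -big_distrr /= charsum //; case: eqP => _; case: eqP => _ /=;
  by rewrite ?mul1r ?mul0r ?mulr1 ?mulr0.
Qed.

End Omega.

From mathcomp Require Import all_boot all_order all_algebra.
From mathcomp Require Import all_classical all_reals all_analysis.
From mathcomp Require Import complex.
Set Implicit Arguments. Unset Strict Implicit. Unset Printing Implicit Defensive.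
Import Order.TTheory GRing.Theory Num.Theory numFieldNormedType.Exports.
Local Open Scope ring_scope.
From mathcomp Require Import ring lra.

Lemma prod_bool (K : comPzRingType) (I : finType) (b : I -> bool) :
  \prod_i (b i)%:R = [forall i, b i]%:R :> K.
Proof.
case: (boolP [forall i, b i]) => [/forallP h|].
  by rewrite big1 // => i _; rewrite h.
rewrite negb_forall => /existsP [i /negbTE hi].
by rewrite (bigD1 i) //= hi mul0r.
Qed.

Section PauliN.
Variables (R : realType) (d n : nat).
Hypothesis hd : (1 < d)%N.
Local Notation T := (qbasis d n).
Local Notation op := (op R d n).
Local Notation Dn := ((d ^ n)%:R : R).

Lemma Dn_gt0 : 0 < Dn.
Proof. by rewrite ltr0n expn_gt0 (d_gt0 hd). Qed.

Lemma pauli_orth (x y x' y' : T) :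
  \sum_(a : pstring d n) pauli R a y x * (pauli R a y' x')^* =
  (d ^ n)%:R * ((y == y') && (x == x'))%:R.
Proof.
rewrite /pauli.
under eq_bigr do rewrite rmorph_prod -big_split /=.
rewrite -(bigA_distr_bigA (fun i v => pauli1 R v (y i) (x i) * (pauli1 R v (y' i) (x' i))^*)).
under eq_bigr do rewrite pauli1_orth //.
rewrite big_split /= prodr_const card_ord natrX prod_bool.
have -> // : [forall i, (y i == y' i) && (x i == x' i)] = (y == y') && (x == x').
apply/idP/idP => [/forallP h|/andP[/eqP-> /eqP->]]; last by apply/forallP => i; rewrite !eqxx.
by apply/andP; split; apply/eqP/ffunP => i; case/andP: (h i) => /eqP ? /eqP.
Qed.

Definition trp (X : op) (a : pstring d n) := optr (opmul X (pauli R a)).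

Lemma parseval_aux (X : op) (x y : T) :
  \sum_(a : pstring d n) pauli R a y x * (trp X a)^* = (d ^ n)%:R * (X x y)^*.
Proof.
rewrite /trp /optr /opmul.
under eq_bigr do rewrite rmorph_sum big_distrr /=.
rewrite exchange_big /=.
under eq_bigr do (under eq_bigr do rewrite rmorph_sum big_distrr /=; rewrite exchange_big /=).
under eq_bigr do (under eq_bigr do (under eq_bigr do rewrite rmorphM mulrCA; rewrite -big_distrr /= pauli_orth)).
rewrite (bigD1 x) //= [X in _ + X]big1 ?addr0; last first.
  move=> x' /negbTE hx; apply: big1 => y' _.
  by rewrite [x == _]eq_sym hx andbF mulr0 mulr0.
rewrite (bigD1 y) //= [X in _ + X]big1 ?addr0; last first.
  by move=> y' /negbTE hy; rewrite [y == _]eq_sym hy mulr0 mulr0.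
by rewrite !eqxx mulr1 mulrC.
Qed.

Lemma parseval (X : op) :
  \sum_(a : pstring d n) nc (trp X a) ^+ 2 = Dn * fro X.
Proof.
apply: (@complexI R); rewrite rmorph_sum rmorphM rmorph_nat /=.
under eq_bigr do rewrite -conjM_nc mulrC.
rewrite /fro rmorph_sum /= big_distrr /=.
have -> : \sum_(a : pstring d n) trp X a * (trp X a)^* =
   \sum_x \sum_y X x y * \sum_(a : pstring d n) pauli R a y x * (trp X a)^*.
  under eq_bigr do rewrite {1}/trp /optr /opmul big_distrl /=.
  rewrite exchange_big /=; apply: eq_bigr => x _.
  under eq_bigr do rewrite big_distrl /=.
  rewrite exchange_big /=; apply: eq_bigr => y _.
  by rewrite big_distrr /=; apply: eq_bigr => a _; rewrite mulrA.
apply: eq_bigr => x _; rewrite rmorph_sum big_distrr /=; apply: eq_bigr => y _.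
by rewrite parseval_aux -conjM_nc mulrCA [X x y * _]mulrC.
Qed.

Lemma pauli_split (a : pstring d n) i (x y : T) :
  pauli R a x y = pauli1 R (a i) (x i) (y i) *
                  \prod_(j | j != i) pauli1 R (a j) (x j) (y j).
Proof. by rewrite /pauli (bigD1 i). Qed.

Lemma pauli_upd (a : pstring d n) i (x y : T) c :
  pauli R a (upd x i c) (upd y i c) = pauli1 R (a i) c c *
                  \prod_(j | j != i) pauli1 R (a j) (x j) (y j).
Proof.
rewrite (pauli_split a i) !upd_at; congr (_ * _).
by apply: eq_bigr => j hj; rewrite !upd_ne.
Qed.

Definition a0 (a : pstring d n) i : bool :=
  ((a i).1 == 0 :> nat) && ((a i).2 == 0 :> nat).

Lemma Tw_pauli i (a : pstring d n) :
  Tw i (pauli R a) = opscale (a0 a i)%:R (pauli R a).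
Proof.
apply/funext => x; apply/funext => y; rewrite TwE /opscale.
under eq_bigr do rewrite pauli_upd.
rewrite -big_distrl /= diag_sum // (pauli_split a i x y) -/(a0 a i).
case h: (a0 a i); last by rewrite /= !(mulr0n, mulr0, mul0r).
move: h; rewrite /a0 => /andP[/eqP h1 /eqP h2].
rewrite pauli1E // h1 h2 addn0 mul0n expr0 mulr1 modn_small //.
by field; exact: dC_neq0.
Qed.

Lemma tr_Tw (X : op) i a : trp (Tw i X) a = (a0 a i)%:R * trp X a.
Proof. by rewrite /trp optr_Tw Tw_pauli opmul_scaler optr_scale. Qed.

Lemma nc_bool (b : bool) : nc (b%:R : R[i]) = b%:R.
Proof. by case: b; rewrite ?nc0 //= -[1]/(1%:C%C) ncR normr1. Qed.

Lemma pw_eq (X : op) a :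
  pauli_weight X a = ((d ^ (2 * n))%:R)^-1 * nc (trp X a) ^+ 2.
Proof. by rewrite /pauli_weight normcC. Qed.

Lemma pweightE (a : pstring d n) : (pweight a)%:R = \sum_i (~~ a0 a i)%:R :> R.
Proof.
rewrite /pweight -sum1_card natr_sum big_mkcond /=; apply: eq_bigr => i _.
rewrite unfold_in /= asboolb /a0 negb_and.
by case: (((a i).1 : nat) == 0%N) => /=; case: (((a i).2 : nat) == 0%N).
Qed.

Lemma q_Tw (X : op) i a : nc (trp (Tw i X) a) ^+ 2 = (a0 a i)%:R * nc (trp X a) ^+ 2.
Proof. by rewrite tr_Tw ncM nc_bool exprMn; case: (a0 a i); rewrite ?expr1n ?expr0n. Qed.

Lemma influenceE (X : op) :
  influence X = Dn^-1 * \sum_i (fro X - fro (Tw i X)).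
Proof.
rewrite /influence.
transitivity (((d ^ (2 * n))%:R)^-1 *
   \sum_i \sum_(a : pstring d n) (~~ a0 a i)%:R * nc (trp X a) ^+ 2).
  rewrite exchange_big big_distrr /=; apply: eq_bigr => a _.
  by rewrite pw_eq pweightE mulrCA -big_distrl.
have e i : \sum_(a : pstring d n) (~~ a0 a i)%:R * nc (trp X a) ^+ 2 =
           Dn * (fro X - fro (Tw i X)).
  rewrite mulrBr -!parseval -sumrB; apply: eq_bigr => a _.
  by rewrite q_Tw; case: (a0 a i); rewrite ?mul0r ?mul1r ?subrr ?subr0.
under eq_bigr do rewrite e.
rewrite -big_distrr /= mulrA; congr (_ * _).
have Dn0 : Dn != 0 by rewrite gt_eqF // Dn_gt0.
by rewrite mulnC expnM natrX; field.
Qed.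

Lemma fro_Tw_le (X : op) i : fro (Tw i X) <= fro X.
Proof.
rewrite -(ler_pM2l Dn_gt0) -!parseval; apply: ler_sum => a _.
rewrite q_Tw; case: (a0 a i); rewrite ?mul1r ?mul0r //.
exact: sqr_ge0.
Qed.

Lemma local_bound (S : {set 'I_n}) (U X : op) :
  opmul (opadj U) U = opid -> (forall i, i \notin S -> commE i U) ->
  fro X = Dn ->
  `|influence (opmul (opmul U X) (opadj U)) - influence X| <= #|S|%:R.
Proof.
move=> hU hloc hX.
set Y := opmul (opmul U X) (opadj U).
have fY : fro Y = fro X by rewrite /Y fro_conj.
have Dn0 : 0 <= Dn^-1 by rewrite invr_ge0 ltW // Dn_gt0.
rewrite !influenceE fY -mulrBr -sumrB normrM (ger0_norm Dn0).
apply: (@le_trans _ _ (Dn^-1 * \sum_i (if i \in S then fro X else 0))).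
  rewrite ler_wpM2l //.
  apply: le_trans (ler_norm_sum _ _ _) _; apply: ler_sum => i _.
  case: ifP => iS.
    have h1 := fro_Tw_le X i; have h2 := fro_Tw_le Y i.
    have h3 := fro_ge0 (Tw i X); have h4 := fro_ge0 (Tw i Y).
    rewrite fY in h2; rewrite ler_norml; apply/andP; split; lra.
  have hi : i \notin S by rewrite iS.
  have -> : Tw i Y = opmul (opmul U (Tw i X)) (opadj U).
    by rewrite /Y Tw_conj //; [exact: hloc | apply: commE_adj; exact: hloc].
  by rewrite fro_conj // subrr normr0.
rewrite -big_mkcond /= sumr_const hX mulrnAr mulVf //.
by rewrite gt_eqF // Dn_gt0.
Qed.

End PauliN.

From mathcomp Require Import all_boot all_order all_algebra.
From mathcomp Require Import all_classical all_reals all_analysis.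
From mathcomp Require Import complex.
Set Implicit Arguments. Unset Strict Implicit. Unset Printing Implicit Defensive.
Import Order.TTheory GRing.Theory Num.Theory numFieldNormedType.Exports.
Local Open Scope ring_scope.
From mathcomp Require Import ring lra.
Local Open Scope classical_set_scope.

Section CCvg.
Variable R : realType.

Lemma ReD (x y : R[i]) : complex.Re (x + y) = complex.Re x + complex.Re y.
Proof. by case: x; case: y. Qed.
Lemma ImD (x y : R[i]) : complex.Im (x + y) = complex.Im x + complex.Im y.
Proof. by case: x; case: y. Qed.
Lemma ReM (x y : R[i]) :
  complex.Re (x * y) = complex.Re x * complex.Re y - complex.Im x * complex.Im y.
Proof. by case: x; case: y. Qed.
Lemma ImM (x y : R[i]) :
  complex.Im (x * y) = complex.Re x * complex.Im y + complex.Im x * complex.Re y.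
Proof. by case: x => a b; case: y => c e /=; ring. Qed.
Lemma ReJ (x : R[i]) : complex.Re (x^*) = complex.Re x.
Proof. by case: x. Qed.
Lemma ImJ (x : R[i]) : complex.Im (x^*) = - complex.Im x.
Proof. by case: x. Qed.
Lemma ReB (x y : R[i]) : complex.Re (x - y) = complex.Re x - complex.Re y.
Proof. by case: x; case: y. Qed.
Lemma ImB (x y : R[i]) : complex.Im (x - y) = complex.Im x - complex.Im y.
Proof. by case: x; case: y. Qed.
Lemma Re_sum (I : Type) (r : seq I) (P : pred I) (F : I -> R[i]) :
  complex.Re (\sum_(i <- r | P i) F i) = \sum_(i <- r | P i) complex.Re (F i).
Proof. by apply: (big_morph _ ReD). Qed.
Lemma Im_sum (I : Type) (r : seq I) (P : pred I) (F : I -> R[i]) :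
  complex.Im (\sum_(i <- r | P i) F i) = \sum_(i <- r | P i) complex.Im (F i).
Proof. by apply: (big_morph _ ImD). Qed.

Lemma nc_sumG (I : Type) (r : seq I) (P : pred I) (F : I -> R[i]) :
  nc (\sum_(i <- r | P i) F i) <= \sum_(i <- r | P i) nc (F i).
Proof.
elim/big_ind2: _ => //; first by rewrite nc0.
by move=> x1 x2 y1 y2 h1 h2; apply: le_trans (ncD _ _) (lerD h1 h2).
Qed.

Definition ccvg (u : nat -> R[i]) (L : R[i]) :=
  (fun N => complex.Re (u N)) @ \oo --> complex.Re L /\
  (fun N => complex.Im (u N)) @ \oo --> complex.Im L.

Lemma ccvg_cst c : ccvg (fun _ => c) c.
Proof. by split; apply: cvg_cst. Qed.

Lemma ccvg_ext u v L : (forall N, u N = v N) -> ccvg u L -> ccvg v L.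
Proof. by move=> e [h1 h2]; split; [under eq_fun do rewrite -e | under eq_fun do rewrite -e]. Qed.

Lemma ccvgD u v a b : ccvg u a -> ccvg v b -> ccvg (fun N => u N + v N) (a + b).
Proof.
move=> [h1 h2] [h3 h4]; split.
  by under eq_fun do rewrite ReD; rewrite ReD; apply: cvgD.
by under eq_fun do rewrite ImD; rewrite ImD; apply: cvgD.
Qed.

Lemma ccvgM u v a b : ccvg u a -> ccvg v b -> ccvg (fun N => u N * v N) (a * b).
Proof.
move=> [h1 h2] [h3 h4]; split.
  by under eq_fun do rewrite ReM; rewrite ReM; apply: cvgB; apply: cvgM.
by under eq_fun do rewrite ImM; rewrite ImM; apply: cvgD; apply: cvgM.
Qed.

Lemma ccvgJ u a : ccvg u a -> ccvg (fun N => (u N)^*) a^*.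
Proof.
move=> [h1 h2]; split; first by under eq_fun do rewrite ReJ; rewrite ReJ.
by under eq_fun do rewrite ImJ; rewrite ImJ; apply: cvgN.
Qed.

Lemma ccvg_sum_seq (I : Type) (r : seq I) (u : I -> nat -> R[i]) (L : I -> R[i]) :
  (forall i, ccvg (u i) (L i)) ->
  ccvg (fun N => \sum_(i <- r) u i N) (\sum_(i <- r) L i).
Proof.
move=> h; elim: r => [|i s IH].
  by rewrite big_nil; apply: ccvg_ext (ccvg_cst 0) => N; rewrite big_nil.
rewrite big_cons; apply: ccvg_ext (ccvgD (h i) IH) => N; by rewrite big_cons.
Qed.

Lemma ccvg_sum (I : finType) (u : I -> nat -> R[i]) (L : I -> R[i]) :
  (forall i, ccvg (u i) (L i)) -> ccvg (fun N => \sum_i u i N) (\sum_i L i).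
Proof. exact: ccvg_sum_seq. Qed.

Lemma ccvg_uniq u a b : ccvg u a -> ccvg u b -> a = b.
Proof.
move=> [h1 h2] [h3 h4].
apply/eqP; rewrite eq_complex; apply/andP; split; apply/eqP.
  exact: (cvg_unique _ h1 h3).
exact: (cvg_unique _ h2 h4).
Qed.

Lemma ccvg_bound u L (e : nat -> R) :
  (\forall N \near \oo, nc (u N - L) <= e N) -> e @ \oo --> 0 -> ccvg u L.
Proof.
move=> hb /cvgrPdist_lt he; split; apply/cvgrPdist_lt => eps eps0.
  apply: filterS2 hb (he _ eps0) => N h1 h2.
  rewrite distrC -ReB; apply: le_lt_trans (Re_le_nc _) _.
  by apply: le_lt_trans h1 _; rewrite sub0r normrN in h2; apply: le_lt_trans (ler_norm _) h2.
apply: filterS2 hb (he _ eps0) => N h1 h2.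
rewrite distrC -ImB; apply: le_lt_trans (Im_le_nc _) _.
by apply: le_lt_trans h1 _; rewrite sub0r normrN in h2; apply: le_lt_trans (ler_norm _) h2.
Qed.

Lemma ccvg_lim u L : ccvg u L ->
  Complex (limn (fun N => complex.Re (u N))) (limn (fun N => complex.Im (u N))) = L.
Proof. by case: L => a b [h1 h2]; rewrite (norm_cvg_lim h1) (norm_cvg_lim h2). Qed.

End CCvg.

From mathcomp Require Import all_boot all_order all_algebra.
From mathcomp Require Import all_classical all_reals all_analysis.
From mathcomp Require Import complex.
Set Implicit Arguments. Unset Strict Implicit. Unset Printing Implicit Defensive.
Import Order.TTheory GRing.Theory Num.Theory numFieldNormedType.Exports.
Local Open Scope ring_scope.
From mathcomp Require Import ring lra.
Local Open Scope classical_set_scope.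

Section Tri.
Variable V : zmodType.
Implicit Types f : nat -> nat -> V.

Definition tri N f := \sum_(0 <= j < N) \sum_(0 <= k < N - j) f j k.
Definition rest N f := \sum_(0 <= j < N) \sum_(N - j <= k < N) f j k.

Lemma square_split N f :
  \sum_(0 <= j < N) \sum_(0 <= k < N) f j k = tri N f + rest N f.
Proof.
rewrite /tri /rest -big_split /=; apply: eq_big_nat => j /andP[_ jN].
by rewrite -big_cat_nat // leq_subr.
Qed.

Lemma tri_rec N f : tri N.+1 f = tri N f + \sum_(0 <= j < N.+1) f j (N - j)%N.
Proof.
rewrite /tri big_nat_recr //= subSnn big_nat1 [in RHS]big_nat_recr //= subnn.
rewrite addrA; congr (_ + _); rewrite -big_split /=.
apply: eq_big_nat => j /andP[_ jN].
by rewrite subSn ?(ltnW jN) // big_nat_recr.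
Qed.

Lemma tri_eq N f (g : nat -> V) :
  (forall m, \sum_(0 <= j < m.+1) f j (m - j)%N = g m) ->
  tri N f = \sum_(0 <= m < N) g m.
Proof.
move=> h; elim: N => [|N IH]; first by rewrite /tri !big_geq.
by rewrite tri_rec IH h big_nat_recr.
Qed.
End Tri.

Lemma fact_neq0 (F : numFieldType) k : (k`!%:R : F) != 0.
Proof. by rewrite pnatr_eq0 -lt0n fact_gt0. Qed.

Lemma binom_exp (F : numFieldType) (x y : F) m :
  \sum_(0 <= j < m.+1) ((j`!%:R)^-1 * x ^+ j) * (((m - j)%N`!%:R)^-1 * y ^+ (m - j)%N)
  = (m`!%:R)^-1 * (x + y) ^+ m.
Proof.
rewrite addrC exprDn big_distrr big_mkord /=; apply: eq_bigr => j _.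
have jm : (j <= m)%N by rewrite -ltnS.
have hb := bin_fact jm.
have eC : ('C(m, j)%:R : F) = m`!%:R / (j`!%:R * (m - j)`!%:R).
  by rewrite -hb !natrM mulfK // mulf_neq0 ?fact_neq0.
rewrite -[_ *+ 'C(m, j)]mulr_natr eC.
have h1 := fact_neq0 F j; have h2 := fact_neq0 F (m - j); have h3 := fact_neq0 F m.
by field; rewrite h1 h2.
Qed.

Lemma le_sum1 (R : realType) (I : finType) (F : I -> R) i :
  (forall j, 0 <= F j) -> F i <= \sum_j F j.
Proof. by move=> h; rewrite (bigD1 i) //= lerDl sumr_ge0. Qed.

Section Mx.
Variables (R : realType) (d n : nat).
Hypothesis hd : (0 < d)%N.
Local Notation T := (qbasis d n).
Local Notation op := (op R d n).

Definition Dm := #|T|.-1.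
Lemma cardT : #|T| = Dm.+1.
Proof. by rewrite /Dm prednK //; apply/card_gt0P; exists [ffun=> Ordinal hd]. Qed.

Local Notation MX := 'M[R[i]]_Dm.+1.

Definition idx (p : 'I_Dm.+1) : T := enum_val (cast_ord (esym cardT) p).
Definition ridx (x : T) : 'I_Dm.+1 := cast_ord cardT (enum_rank x).
Lemma idxK : cancel idx ridx.
Proof. by move=> p; rewrite /idx /ridx enum_valK cast_ordKV. Qed.
Lemma ridxK : cancel ridx idx.
Proof. by move=> x; rewrite /idx /ridx cast_ordK enum_rankK. Qed.

Lemma sum_idx (F : T -> R[i]) : \sum_x F x = \sum_p F (idx p).
Proof.
rewrite (reindex idx) //; apply: onW_bij; exists ridx; [exact: idxK | exact: ridxK].
Qed.

Definition toM (A : op) : MX := \matrix_(p, q) A (idx p) (idx q).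

Lemma toME A p q : toM A p q = A (idx p) (idx q).
Proof. by rewrite mxE. Qed.

Lemma toM_mul A B : toM (opmul A B) = toM A * toM B.
Proof.
apply/matrixP => p q; rewrite -mulmxE !mxE /opmul sum_idx.
by apply: eq_bigr => r _; rewrite !mxE.
Qed.

Lemma toM_id : toM opid = 1.
Proof. by apply/matrixP => p q; rewrite !mxE /opid (inj_eq (can_inj idxK)). Qed.

Lemma toM_pow A k : toM (oppow A k) = toM A ^+ k.
Proof.
elim: k => [|k IH]; first by rewrite expr0 toM_id.
by rewrite exprS -IH -toM_mul.
Qed.

Definition madj (X : MX) : MX := \matrix_(p, q) (X q p)^*.

Lemma madj_mul X Y : madj (X * Y) = madj Y * madj X.
Proof.
apply/matrixP => p q; rewrite -!mulmxE !mxE rmorph_sum; apply: eq_bigr => r _.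
by rewrite !mxE rmorphM mulrC.
Qed.

Lemma madj1 : madj 1 = 1.
Proof. by apply/matrixP => p q; rewrite !mxE eq_sym rmorph_nat. Qed.

Lemma madj_exp X k : madj (X ^+ k) = madj X ^+ k.
Proof.
elim: k => [|k IH]; first by rewrite !expr0 madj1.
by rewrite exprS madj_mul IH exprSr.
Qed.

Definition SN (X : MX) N : MX := \sum_(k < N) (k`!%:R)^-1 *: X ^+ k.

Lemma toM_exp A N : toM (exp_partial A N) = SN (toM A) N.
Proof.
apply/matrixP => p q; rewrite !mxE summxE /exp_partial; apply: eq_bigr => k _.
by rewrite !mxE -toM_pow mxE.
Qed.

Lemma adjSN X N : madj (SN X N) = SN (madj X) N.
Proof.
apply/matrixP => p q; rewrite !mxE !summxE rmorph_sum; apply: eq_bigr => k _.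
rewrite !mxE -madj_exp mxE rmorphM fmorphV rmorph_nat //.
Qed.

Definition nu (X : MX) : R := \sum_p \sum_q nc (X p q).

Lemma nu_ge0 X : 0 <= nu X.
Proof. by apply: sumr_ge0 => p _; apply: sumr_ge0 => q _; apply: nc_ge0. Qed.

Lemma nc_le_nu (X : MX) p q : nc (X p q) <= nu X.
Proof.
apply: (le_trans (@le_sum1 R _ (fun q => nc (X p q)) q _)) => [j|]; first exact: nc_ge0.
apply: (@le_sum1 R _ (fun p => \sum_q nc (X p q)) p) => j.
by apply: sumr_ge0 => *; apply: nc_ge0.
Qed.

Lemma nu_mul X Y : nu (X * Y) <= nu X * nu Y.
Proof.
rewrite /nu big_distrl /=; apply: ler_sum => p _.
apply: (@le_trans _ _ (\sum_q \sum_r nc (X p r) * nc (Y r q))).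
  apply: ler_sum => q _; rewrite -mulmxE mxE; apply: le_trans (nc_sum _) _.
  by apply: ler_sum => r _; rewrite ncM.
rewrite exchange_big big_distrl /=; apply: ler_sum => r _.
rewrite -big_distrr /=; apply: ler_wpM2l; first exact: nc_ge0.
apply: (@le_sum1 R _ (fun r => \sum_q nc (Y r q))) => j.
by apply: sumr_ge0 => *; apply: nc_ge0.
Qed.

Lemma nu_pow X k : nu (X ^+ k) <= nu 1 * nu X ^+ k.
Proof.
elim: k => [|k IH]; first by rewrite !expr0 mulr1.
rewrite exprS; apply: le_trans (nu_mul _ _) _.
rewrite exprS mulrCA; apply: ler_wpM2l; [exact: nu_ge0 | exact: IH].
Qed.

End Mx.

From mathcomp Require Import all_boot all_order all_algebra.
From mathcomp Require Import all_classical all_reals all_analysis.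
From mathcomp Require Import complex.
Set Implicit Arguments. Unset Strict Implicit. Unset Printing Implicit Defensive.
Import Order.TTheory GRing.Theory Num.Theory numFieldNormedType.Exports.
Local Open Scope ring_scope.
From mathcomp Require Import ring lra.
Local Open Scope classical_set_scope.

Section Exp2.
Variables (R : realType) (d n : nat).
Hypothesis hd : (0 < d)%N.
Local Notation T := (qbasis d n).
Local Notation op := (op R d n).
Local Notation MX := 'M[R[i]]_((Dm d n).+1).

Lemma series_cvg_bound (u : nat -> R) (C r : R) : 0 <= C -> 0 <= r ->
  (forall k, `|u k| <= C * exp_coeff r k) -> cvgn (series u).
Proof.
move=> C0 r0 h; apply: normed_cvg.
apply: (@series_le_cvg _ _ (fun k => C * exp_coeff r k)) => //.
- by move=> k; exact: normr_ge0.
- move=> k; apply: mulr_ge0 => //; rewrite /exp_coeff /=.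
  by rewrite divr_ge0 ?exprn_ge0 ?ler0n.
- exact: (is_cvg_seriesZ (k := C) (is_cvg_series_exp_coeff r)).
Qed.

Lemma nc_invfact k : nc ((k`!%:R)^-1 : R[i]) = (k`!%:R)^-1.
Proof.
have -> : ((k`!%:R)^-1 : R[i]) = ((k`!%:R)^-1 : R)%:C%C by rewrite fmorphV rmorph_nat.
by rewrite ncR ger0_norm // invr_ge0 ler0n.
Qed.

Lemma SN_ccvg (X : MX) p q :
  ccvg (fun N => SN X N p q)
    (Complex (limn (fun N => complex.Re (SN X N p q)))
             (limn (fun N => complex.Im (SN X N p q)))).
Proof.
have hb k : nc ((((k`!%:R)^-1 : R[i]) *: X ^+ k) p q) <= nu (1 : MX) * exp_coeff (nu X) k.
  rewrite mxE ncM nc_invfact /exp_coeff /= mulrC mulrA.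
  rewrite ler_wpM2r ?invr_ge0 ?ler0n //.
  apply: le_trans; first exact: nc_le_nu.
  exact: nu_pow.
have r0 := nu_ge0 X; have D0 := nu_ge0 (1 : MX).
have eR : (fun N => complex.Re (SN X N p q)) =
          series (fun k => complex.Re ((((k`!%:R)^-1 : R[i]) *: X ^+ k) p q)).
  by apply: funext => N; rewrite /SN summxE Re_sum /series /= big_mkord.
have eI : (fun N => complex.Im (SN X N p q)) =
          series (fun k => complex.Im ((((k`!%:R)^-1 : R[i]) *: X ^+ k) p q)).
  by apply: funext => N; rewrite /SN summxE Im_sum /series /= big_mkord.
split; rewrite /= ?eR ?eI; apply: (series_cvg_bound D0 r0) => k.
  exact: le_trans (Re_le_nc _) (hb k).
exact: le_trans (Im_le_nc _) (hb k).
Qed.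

Definition fc j k : R[i] := ((-1) ^+ j * (j`!%:R)^-1) * (k`!%:R)^-1.

Lemma SN_prod (X : MX) N : SN (- X) N * SN X N =
  \sum_(0 <= j < N) \sum_(0 <= k < N) fc j k *: X ^+ (j + k).
Proof.
rewrite /SN mulr_suml big_mkord; apply: eq_bigr => j _.
rewrite mulr_sumr big_mkord; apply: eq_bigr => k _.
rewrite -scalerAl -scalerAr scalerA -scaleN1r exprZn -scalerAl scalerA -exprD.
by congr (_ *: _); rewrite /fc; ring.
Qed.

Lemma tri_fc (X : MX) N : (0 < N)%N -> tri N (fun j k => fc j k *: X ^+ (j + k)) = 1.
Proof.
move=> N0.
rewrite (@tri_eq _ N _ (fun m => ((m`!%:R)^-1 * (0 : R[i]) ^+ m) *: X ^+ m)).
  case: N N0 => // N _; rewrite big_nat_recl //= fact0 invr1 expr0 mul1r expr0 scale1r.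
  by rewrite big1 ?addr0 // => m _; rewrite expr0n /= mulr0 scale0r.
move=> m.
rewrite (@eq_big_nat _ _ _ 0 m.+1 _ (fun j => fc j (m - j)%N *: X ^+ m)); last first.
  by move=> j /andP[_ jm]; rewrite subnKC // -ltnS.
rewrite -scaler_suml; congr (_ *: _).
have hb := binom_exp (-1 : R[i]) 1 m; rewrite addNr in hb.
rewrite -hb; apply: eq_bigr => j _.
by rewrite expr1n /fc; ring.
Qed.

Definition gr (r : R) j k : R := ((j`!%:R)^-1 * r ^+ j) * ((k`!%:R)^-1 * r ^+ k).

Lemma nc_sign j : nc ((-1) ^+ j : R[i]) = 1.
Proof.
elim: j => [|j IH]; first by rewrite expr0 -[1]/(1%:C%C) ncR normr1.
by rewrite exprS ncM IH ncN -[1]/(1%:C%C) ncR normr1 mulr1.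
Qed.

Lemma rest_bound (X : MX) N p q :
  nc ((rest N (fun j k => fc j k *: X ^+ (j + k))) p q) <= nu (1 : MX) * rest N (gr (nu X)).
Proof.
rewrite /rest summxE; apply: le_trans; first exact: nc_sumG.
rewrite big_distrr /=; apply: ler_sum => j _.
rewrite summxE; apply: le_trans; first exact: nc_sumG.
rewrite big_distrr /=; apply: ler_sum => k _.
rewrite mxE ncM /fc !ncM nc_sign !nc_invfact mul1r.
have -> : nu (1 : MX) * gr (nu X) j k = ((j`!%:R)^-1 * (k`!%:R)^-1) * (nu (1 : MX) * nu X ^+ (j + k)).
  by rewrite /gr exprD; ring.
rewrite ler_wpM2l ?mulr_ge0 ?invr_ge0 ?ler0n //.
exact: le_trans (nc_le_nu _ _ _) (nu_pow _ _).
Qed.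

Lemma rest_gr r N :
  rest N (gr r) = (series (exp_coeff r) N) ^+ 2 - series (exp_coeff (r + r)) N.
Proof.
have h := square_split N (gr r).
have -> : rest N (gr r) = \sum_(0 <= j < N) \sum_(0 <= k < N) gr r j k - tri N (gr r).
  by rewrite h addrAC subrr add0r.
rewrite (@tri_eq _ N _ (fun m => (m`!%:R)^-1 * (r + r) ^+ m)); last first.
  by move=> m; rewrite -binom_exp.
congr (_ - _); last by rewrite /series /exp_coeff /=; apply: eq_bigr => m _; rewrite mulrC.
rewrite expr2 /series /exp_coeff /= big_distrl /=; apply: eq_bigr => j _.
rewrite big_distrr /=; apply: eq_bigr => k _.
by rewrite /gr [_ / _]mulrC [(r ^+ k / _)]mulrC.
Qed.

Lemma rest_cvg0 (C r : R) : (fun N => C * rest N (gr r)) @ \oo --> 0.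
Proof.
have h1 : series (exp_coeff r) @ \oo --> expR r := is_cvg_series_exp_coeff r.
have h2 : series (exp_coeff (r + r)) @ \oo --> expR (r + r) := is_cvg_series_exp_coeff (r + r).
have : (fun N => C * (series (exp_coeff r) N * series (exp_coeff r) N
                      - series (exp_coeff (r + r)) N)) @ \oo -->
       C * (expR r * expR r - expR (r + r)).
  apply: cvgM; first exact: cvg_cst.
  by apply: cvgB => //; apply: cvgM.
rewrite expRD subrr mulr0.
by under eq_fun do rewrite -expr2 -rest_gr.
Qed.

Lemma SN_unit (X : MX) p q : ccvg (fun N => (SN (- X) N * SN X N) p q) ((1 : MX) p q).
Proof.
apply: (@ccvg_bound _ _ _ (fun N => nu (1 : MX) * rest N (gr (nu X)))); last exact: rest_cvg0.
near=> N.
have N0 : (0 < N)%N by near: N; exists 1%N.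
have e : forall a b c : R[i], a = c -> a + b - c = b by move=> a b c ->; rewrite addrAC subrr add0r.
rewrite SN_prod square_split tri_fc // mxE e; first exact: rest_bound.
reflexivity.
Unshelve. all: by end_near.
Qed.

End Exp2.

From mathcomp Require Import all_boot all_order all_algebra.
From mathcomp Require Import all_classical all_reals all_analysis.
From mathcomp Require Import complex.
Set Implicit Arguments. Unset Strict Implicit. Unset Printing Implicit Defensive.
Import Order.TTheory GRing.Theory Num.Theory numFieldNormedType.Exports.
Local Open Scope ring_scope.
From mathcomp Require Import ring lra.

Section Final.
Variables (R : realType) (d n : nat).
Hypothesis hd : (0 < d)%N.
Local Notation T := (qbasis d n).
Local Notation op := (op R d n).
Local Notation MX := 'M[R[i]]_((Dm d n).+1).
Local Notation idx := (@idx d n hd).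
Local Notation ridx := (@ridx d n hd).

Lemma opexp_ext (A : op) x y x' y' :
  (forall N, exp_partial A N x y = exp_partial A N x' y') -> opexp A x y = opexp A x' y'.
Proof.
move=> h; rewrite /opexp.
have e1 : (fun N => complex.Re (exp_partial A N x y)) =
          (fun N => complex.Re (exp_partial A N x' y')) by apply: funext => N; rewrite h.
have e2 : (fun N => complex.Im (exp_partial A N x y)) =
          (fun N => complex.Im (exp_partial A N x' y')) by apply: funext => N; rewrite h.
by rewrite e1 e2.
Qed.

Lemma opexp_zero (A : op) x y :
  (forall N, exp_partial A N x y = 0) -> opexp A x y = 0.
Proof.
move=> h; rewrite /opexp.
have e1 : (fun N => complex.Re (exp_partial A N x y)) = (fun _ => 0)
  by apply: funext => N; rewrite h.
have e2 : (fun N => complex.Im (exp_partial A N x y)) = (fun _ => 0)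
  by apply: funext => N; rewrite h.
by rewrite e1 e2 !(norm_cvg_lim (cvg_cst _)).
Qed.

Lemma toM_opadj (A : op) : toM hd (opadj A) = madj (toM hd A).
Proof. by apply/matrixP => p q; rewrite !mxE. Qed.

Lemma toM_neg (A : op) : toM hd (opscale (-1) A) = - toM hd A.
Proof. by apply/matrixP => p q; rewrite !mxE /opscale mulN1r. Qed.

Lemma opexp_unitary (A : op) : opadj A = opscale (-1) A ->
  opmul (opadj (opexp A)) (opexp A) = opid.
Proof.
move=> hA; set U := opexp A; set MA := toM hd A.
have e N p q : exp_partial A N (idx p) (idx q) = SN MA N p q.
  by rewrite -toM_exp toME.
have hU p q : ccvg (fun N => SN MA N p q) (U (idx p) (idx q)).
  have eR : (fun N => complex.Re (exp_partial A N (idx p) (idx q))) =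
            (fun N => complex.Re (SN MA N p q)) by apply: funext => N; rewrite e.
  have eI : (fun N => complex.Im (exp_partial A N (idx p) (idx q))) =
            (fun N => complex.Im (SN MA N p q)) by apply: funext => N; rewrite e.
  by rewrite /U /opexp eR eI; apply: SN_ccvg.
have hMA : madj MA = - MA by rewrite /MA -toM_opadj hA toM_neg.
apply/funext => x; apply/funext => y.
rewrite -(ridxK hd x) -(ridxK hd y); set p := ridx x; set q := ridx y.
rewrite /opmul /opadj (sum_idx hd).
apply: (@ccvg_uniq _ (fun N => (SN (- MA) N * SN MA N) p q)).
  apply: ccvg_ext (ccvg_sum (fun r => ccvgM (ccvgJ (hU r p)) (hU r q))) => N.
  rewrite -hMA -adjSN -mulmxE mxE; apply: eq_bigr => r _.
  by rewrite mxE.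
rewrite /opid (inj_eq (can_inj (idxK hd))).
have := SN_unit MA p q; rewrite mxE.
by [].
Qed.

Lemma commE_scale i c (A : op) : commE i A -> commE i (opscale c A).
Proof. by move=> h c1 c2; rewrite opmul_scalel opmul_scaler h. Qed.

Lemma commE_pow i (A : op) k : commE i A -> commE i (oppow A k).
Proof.
move=> h; elim: k => [|k IH] c1 c2; first by rewrite /oppow /= opmul1l opmul1r.
rewrite /oppow iterS -/(oppow A k).
by rewrite opmulA IH -!opmulA h.
Qed.

Lemma commE_exp_partial i (A : op) N : commE i A -> commE i (exp_partial A N).
Proof.
move=> h c1 c2.
have -> : exp_partial A N = opsum (fun k : 'I_N => opscale ((k`!%:R)^-1) (oppow A k)).
  by [].
rewrite opmul_suml opmul_sumr; congr opsum; apply: funext => k.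
by rewrite (commE_scale _ (commE_pow _ h)).
Qed.

Lemma commE_opexp i (A : op) : commE i A -> commE i (opexp A).
Proof.
move=> h c c'; apply/funext => x; apply/funext => y; rewrite mulE_r mulE_l.
have e N := congr1 (fun F => F x y) (commE_exp_partial N h c c').
case: (eqVneq (y i) c') => hy; case: (eqVneq (x i) c) => hx /=.
- rewrite !mul1r; apply: opexp_ext => N.
  by have := e N; rewrite /= mulE_r mulE_l hx hy !eqxx !mul1r.
- rewrite mul1r mul0r; apply: opexp_zero => N.
  have := e N; rewrite /= mulE_r mulE_l hy eqxx (negbTE hx) mul1r mul0r.
  by [].
- rewrite mul1r mul0r; apply/esym/opexp_zero => N.
  have := e N; rewrite /= mulE_r mulE_l hx eqxx (negbTE hy) mul1r mul0r.
  by move/esym.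
- by rewrite !mul0r.
Qed.

Lemma H_commE (S : {set 'I_n}) (H : op) i :
  acts_only_on S H -> i \notin S -> commE i H.
Proof.
case=> h [hS hH] iS c c'; apply/funext => x; apply/funext => y.
rewrite mulE_r mulE_l !hH.
have ne j : j \in S -> j != i by apply: contraTneq => ->.
have e1 : h x (upd y i c) = h x y by apply: hS => // j /ne jn; rewrite upd_ne.
have e2 : h (upd x i c') y = h x y by apply: hS => // j /ne jn; rewrite upd_ne.
rewrite e1 e2.
case: (eqVneq (y i) c') => hy; case: (eqVneq (x i) c) => hx; rewrite ?mul1r ?mul0r //.
- congr (if _ then _ else _); apply/forallP/forallP => hh j; have := hh j;
    (case: (eqVneq j i) => [->|ji]; [by rewrite !upd_at hx hy !eqxx implybT | by rewrite !upd_ne]).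
- case: ifP => // /forallP /(_ i); rewrite iS upd_at /=.
  by rewrite (negbTE hx).
- case: ifP => // /forallP /(_ i); rewrite iS upd_at /=.
  by rewrite eq_sym (negbTE hy).
Qed.

Lemma hsnorm_fro (O : op) : hsnorm O = 1 -> fro O = (d ^ n)%:R.
Proof.
rewrite /hsnorm froC.
have -> : (((d ^ n)%:R)^-1 : R[i]) * (fro O)%:C%C = (((d ^ n)%:R)^-1 * fro O : R)%:C%C.
  by rewrite rmorphM fmorphV rmorph_nat.
rewrite /= => h.
have v0 : 0 <= ((d ^ n)%:R)^-1 * fro O :> R by rewrite mulr_ge0 ?invr_ge0 ?ler0n ?fro_ge0.
have := sqr_sqrtr v0; rewrite h expr1n => /esym/eqP.
have Dn0 : ((d ^ n)%:R : R) != 0 by rewrite pnatr_eq0 expn_eq0 (gtn_eqF hd).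
move=> /eqP hh; apply: (mulfI (invr_neq0 Dn0)); rewrite hh mulVf //.
Qed.

End Final.

Lemma adj_A (R : realType) (d n : nat) (H : op R d n) (t : R) :
  is_hermitian_op H ->
  opadj (opscale (Complex 0 (- t)) H) = opscale (-1) (opscale (Complex 0 (- t)) H).
Proof.
move=> hH; apply/funext => x; apply/funext => y.
have e : (H y x)^* = H x y by move: hH => /(congr1 (fun F => F x y)).
rewrite /opadj /opscale rmorphM /= e mulrA; congr (_ * _).
by apply/eqP; rewrite eq_complex /=; apply/andP; split; apply/eqP; ring.
Qed.

From mathcomp Require Import all_boot all_order all_algebra.
From mathcomp Require Import all_classical all_reals all_analysis.
From mathcomp Require Import complex.
Set Implicit Arguments. Unset Strict Implicit. Unset Printing Implicit Defensive.
Import Order.TTheory GRing.Theory Num.Theory numFieldNormedType.Exports.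
Local Open Scope ring_scope.

Lemma sup_le_k (R : realType) (E : set R) (k : R) : 0 <= k -> ubound E k -> sup E <= k.
Proof.
move=> k0 ub; case: (pselect (E !=set0)%classic) => [ne|e0]; first exact: ge_sup ne ub.
have -> : E = set0%classic.
  by apply/seteqP; split => r // Er; exfalso; apply: e0; exists r.
by rewrite sup0.
Qed.

Local Close Scope classical_set_scope.

Theorem mainTheorem10 (R : realType) (d n k : nat) (H : op R d n) :
  (2 <= d)%N -> (1 <= n)%N ->
  is_hermitian_op H ->
  (exists S : {set 'I_n}, #|S| = k /\ acts_only_on S H) ->
  (* U_t = e^{-itH}; Complex 0 (-t) = -i t *)
  forall t : R, CiS (opexp (opscale (Complex 0 (- t)) H)) <= k%:R.
Proof.
move=> hd2 _ hH [S [hS hloc]] t.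
have hd : (0 < d)%N by apply: ltnW.
set A := opscale (Complex 0 (- t)) H.
set U := opexp A.
have hU : opmul (opadj U) U = opid by apply: (opexp_unitary hd); exact: adj_A.
have hcU : forall i, i \notin S -> commE i U.
  by move=> i hi; apply: commE_opexp; apply: commE_scale; exact: (H_commE hloc hi).
rewrite /CiS; apply: sup_le_k; first exact: ler0n.
move=> r [Op [hO ->]]; rewrite -hS; apply: (local_bound hd2 hU hcU).
exact: (hsnorm_fro hd hO).
Qed.
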